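(* Let $t\geq 3$ and let $(a_1,\dots,a_t,n_1,n_2)$ be integers with $a_1\geq\cdots\geq a_t\geq 2$, $n_1\geq n_2\geq 2$, $a_l\neq n_j$ for all $l,j$, and $\prod_{l=1}^t a_l!=n_1!n_2!$. Suppose $n_1>a_1$ and $n_2>a_i$ for some $2\leq i\leq t$. Put $m_1=a_1+1$, $k_1=n_1-a_1$, $m_2=a_i+1$, $k_2=n_2-a_i$, and $\Delta(m,k)=m(m+1)\cdots(m+k-1)$, so that $\prod_{l\neq 1,i}a_l!=\Delta(m_1,k_1)\Delta(m_2,k_2)$. Then: (i) none of the integers $m_1,m_1+1,\dots,m_1+k_1-1$ is a prime; (ii) with $a=\max_{l\neq 1,i}a_l$, one has $$a\log(a)-a\leq\log(a!)\leq (k_1+k_2)\log(2m_1).$$ *)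

(* Defs.v *)
From mathcomp Require Export all_boot.
From Stdlib Require Export Reals.

Definition Delta (m k : nat) : nat := \prod_(0 <= j < k) (m + j).

(* Main.v *)
Require Import Defs.
From mathcomp Require Import all_boot.
From Stdlib Require Import Reals.
From Stdlib Require Import Lra Lia.
From mathcomp Require Import zify.

Lemma my_ln_le x y : (0 < x -> x <= y -> ln x <= ln y)%R.
Proof.
move=> hx hxy; case: (Rle_lt_or_eq_dec _ _ hxy) => h.
  by left; apply: ln_increasing.
by rewrite h; right.
Qed.

Lemma ln1x_le x : (0 < x -> ln (1 + x) <= x)%R.
Proof.
move=> hx; rewrite -{2}(ln_exp x); apply: my_ln_le; first lra.
exact: exp_ineq1_le.
Qed.

Lemma step_ineq x : (0 < x -> x * (ln (x + 1) - ln x) <= 1)%R.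
Proof.
move=> hx.
have e : (x + 1 = x * (1 + / x))%R by field; lra.
have hi : (0 < / x)%R by apply: Rinv_0_lt_compat.
rewrite e ln_mult; [|lra|lra].
have h := ln1x_le _ hi.
have : (x * ln (1 + / x) <= x * / x)%R by apply: Rmult_le_compat_l; lra.
rewrite Rinv_r; lra.
Qed.

Lemma INR_fact n : INR n.+1`! = (INR n.+1 * INR n`!)%R.
Proof. by rewrite factS mulnE mult_INR. Qed.

Lemma fact_pos n : (0 < INR n`!)%R.
Proof. apply: lt_0_INR; apply/ltP; exact: fact_gt0. Qed.

Lemma stirling_low n : (INR n * ln (INR n) - INR n <= ln (INR n`!))%R.
Proof.
elim: n => [|n IH].
  rewrite /= ln_1; lra.
rewrite INR_fact ln_mult; last exact: fact_pos; last by apply: lt_0_INR; lia.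
rewrite S_INR.
case: n IH => [|n] IH.
  rewrite /=; rewrite ln_1 /=; lra.
have hx : (0 < INR n.+1)%R by apply: lt_0_INR; lia.
have := step_ineq _ hx; nra.
Qed.

Lemma INR_expn m n : INR (expn m n) = (INR m ^ n)%R.
Proof.
elim: n => [|n IH]; first by rewrite expn0.
by rewrite expnS mulnE mult_INR IH.
Qed.
Lemma fact_Delta m k : (m + k)`! = m`! * Defs.Delta m.+1 k.
Proof.
elim: k => [|k IH]; first by rewrite addn0 /Defs.Delta big_geq // muln1.
rewrite addnS factS IH /Defs.Delta big_nat_recr //= mulnCA; congr (_ * _).
by rewrite mulnC addSn.
Qed.

Lemma max_fact_le (r : seq nat) (P : pred nat) (f : nat -> nat) :
  (\max_(i <- r | P i) f i)`! <= \prod_(i <- r | P i) (f i)`!.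
Proof.
apply: (big_ind2 (fun x y => x`! <= y)) => //.
- move=> x1 x2 y1 y2 h1 h2.
  have p1 : 0 < x2 by apply: leq_trans h1; exact: fact_gt0.
  have p2 : 0 < y2 by apply: leq_trans h2; exact: fact_gt0.
  case: (leqP x1 y1) => h.
     apply: leq_trans h2 _; exact: leq_pmull.
   apply: leq_trans h1 _; exact: leq_pmulr.
Qed.


Lemma Delta_le m k c : (forall j, j < k -> m + j <= c) -> Defs.Delta m k <= expn c k.
Proof.
move=> h; rewrite /Defs.Delta.
rewrite -{2}(subn0 k) -prod_nat_const_nat big_nat_cond [X in _ <= X]big_nat_cond.
apply: leq_prod => j /andP [/andP [_ hj] _]; exact: h.
Qed.

Lemma fact_le_pow n : n`! <= expn n n.
Proof.
rewrite fact_prod (_ : expn n n = \prod_(1 <= i < n.+1) n); last by rewrite prod_nat_const_nat subn1.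
rewrite big_nat_cond [X in _ <= X]big_nat_cond.
by apply: leq_prod => j /andP [/andP [_ hj] _].
Qed.

Lemma prime_dvd_fact_le p n : prime p -> p %| n`! -> p <= n.
Proof.
move=> pp; elim: n => [|n IH].
  by rewrite fact0 dvdn1 => /eqP e; move: pp; rewrite e.
rewrite factS Euclid_dvdM // => /orP [h|h].
  exact: dvdn_leq h.
by apply: leqW; apply: IH.
Qed.

Lemma expn_le_base m n e : m <= n -> expn m e <= expn n e.
Proof. by move=> h; elim: e => [|e IH]; rewrite ?expn0 // !expnS leq_mul. Qed.

Theorem lemma2p2 (t : nat) (a : nat -> nat) (n1 n2 i : nat) :
  3 <= t ->
  (forall l, 1 <= l < t -> a l.+1 <= a l) ->
  2 <= a t ->
  2 <= n2 <= n1 ->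
  (forall l, 1 <= l <= t -> a l != n1 /\ a l != n2) ->
  \prod_(1 <= l < t.+1) (a l)`! = n1`! * n2`! ->
  a 1 < n1 ->
  2 <= i <= t ->
  a i < n2 ->
  let m1 := (a 1).+1 in
  let k1 := n1 - a 1 in
  let m2 := (a i).+1 in
  let k2 := n2 - a i in
  let amax := \max_(1 <= l < t.+1 | (l != 1) && (l != i)) a l in
  (forall j, j < k1 -> ~~ prime (m1 + j)) /\
  (INR amax * ln (INR amax) - INR amax <= ln (INR amax`!) /\
   ln (INR amax`!) <= INR (k1 + k2) * ln (2 * INR m1))%R.
Proof.
move=> ht hmono hat hn hneq hprod ha1 hi hai m1 k1 m2 k2 amax.
have mono : forall l, 1 <= l <= t -> a l <= a 1.
  elim=> [//|l IH] /andP[h1 h2].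
  case: l IH h1 h2 => [|l] IH _ h2 //.
  apply: leq_trans (hmono l.+1 _) (IH _); apply/andP; split => //; exact: ltnW.
set P := \prod_(1 <= l < t.+1 | (l != 1) && (l != i)) (a l)`!.
have hsplit : \prod_(1 <= l < t.+1) (a l)`! = (a 1)`! * ((a i)`! * P).
  rewrite (bigD1_seq 1) /=; last by rewrite /index_iota iota_uniq.
    congr (_ * _).
    rewrite -big_filter (bigD1_seq i) /=.
    - by congr (_ * _); rewrite big_filter_cond.
    - rewrite mem_filter mem_index_iota; apply/andP; split; lia.
    - by rewrite filter_uniq // /index_iota iota_uniq.
  by rewrite mem_index_iota; lia.
have e1 : n1`! = (a 1)`! * Defs.Delta m1 k1.
  by rewrite -{1}(subnKC (ltnW ha1)) fact_Delta.
have e2 : n2`! = (a i)`! * Defs.Delta m2 k2.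
  by rewrite -{1}(subnKC (ltnW hai)) fact_Delta.
have hP : P = Defs.Delta m1 k1 * Defs.Delta m2 k2.
  have : (a 1)`! * ((a i)`! * P) = (a 1)`! * ((a i)`! * (Defs.Delta m1 k1 * Defs.Delta m2 k2)).
    rewrite -hsplit hprod e1 e2 -!mulnA; congr (_ * _); by rewrite mulnCA.
  by move/eqP; rewrite !eqn_pmul2l ?fact_gt0 // => /eqP.
split.
  move=> j hj; apply/negP => pp.
  have : m1 + j %| \prod_(1 <= l < t.+1) (a l)`!.
    rewrite hprod; apply: dvdn_mulr; apply: dvdn_fact; rewrite /m1 /k1 in hj *; lia.
  rewrite Euclid_dvd_prod // big_has => /hasP [l]; rewrite mem_index_iota => hl hdv.
  have := prime_dvd_fact_le _ _ pp hdv.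
  have : a l <= a 1 by apply: mono; lia.
  rewrite /m1; lia.
split; first exact: stirling_low.
have hA : amax <= a 1.
  apply/bigmax_leqP_seq => l; rewrite mem_index_iota => hl _; apply: mono; lia.
have hF : amax`! <= P by exact: max_fact_le.
have key : amax`! <= expn (2 * m1) (k1 + k2).
  case: (leqP amax (k1 + k2)) => hk.
    apply: leq_trans (fact_le_pow _) _.
    apply: leq_trans (_ : expn amax amax <= expn (2 * m1) amax) _.
      apply: expn_le_base; rewrite /m1; lia.
    apply: leq_pexp2l => //; rewrite /m1; lia.
  apply: leq_trans hF _; rewrite hP expnD; apply: leq_mul; apply: Delta_le => j hj;
    rewrite /m1 /m2 /k1 /k2 in hj hk *; lia.
have h2 : (2 * INR m1 = INR (2 * m1))%R.
  rewrite mulnE mult_INR; congr (_ * _)%R; simpl; lra.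
rewrite h2 -ln_pow; last by apply: lt_0_INR; rewrite /m1; lia.
rewrite -INR_expn; apply: my_ln_le; first exact: fact_pos.
by apply: le_INR; apply/leP.
Qed.
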